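(* Let $\sigma\in\{1,-1\}$ and let $U$ be an open subset of the Weyl upper half-plane. Let $\natural$ be an involutive map on $n\times n$ matrix functions on $U$ (applied coefficientwise to matrix-valued one-forms) such that $(N_1N_2)^\natural=N_2^\natural N_1^\natural$, $(N_1+N_2)^\natural=N_1^\natural+N_2^\natural$, $(fN)^\natural=f^\natural N^\natural$ for scalar functions $f$, where $f\mapsto f^\natural$ is either the identity or complex conjugation, $\partial_\rho(N^\natural)=(\partial_\rho N)^\natural$, $\partial_v(N^\natural)=(\partial_vN)^\natural$, and $\natural$ commutes with $\star$. Let $V$ be an invertible $n\times n$ matrix function on $U$ of class $C^2$, set $M=V^\natural V$ and $A=M^{-1}dM$. Let $\varphi,\chi:U\to\mathbb{C}$ be $C^\infty$ functions, each of the form $\frac{-\sigma(\omega-v)\pm\sqrt{(\omega-v)^2+\sigma\rho^2}}{\rho}$ for some $\omega\in\mathbb{C}$ and a continuous branch of the square root, with $\varphi,\chi\ne0$ and $\varphi^2+\sigma,\chi^2+\sigma\neq0$ on $U$, and with $\chi=-\sigma/\varphi^\natural$. Let $X$ and $\widetilde X$ be invertible $n\times n$ matrix functions on $U$ of class $C^2$ (with $C^1$ inverses) solving $$\varphi\,(dX+AX)=\star dX,\qquad \chi\,(d\widetilde X+A\widetilde X)=\star d\widetilde X.$$ Then the matrix function $\mathcal{M}=\widetilde X^\natural\,M\,X$ satisfies $d\mathcal{M}=0$ on $U$.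
   Context: The Weyl upper half-plane is $\{(\rho,v)\in\mathbb{R}^2:\rho>0\}$. The Hodge star $\star$ acts on one-forms in $(\rho,v)$ (entrywise, linearly over functions) by $\star d\rho=-\sigma\,dv$, $\star dv=d\rho$. Examples of $\natural$: $N^\natural=N^T$, or $N^\natural=\eta N^\dagger\eta^{-1}$ for a constant invertible matrix $\eta$. *)

(* Defs.v *)
From Stdlib Require Import Reals ClassicalEpsilon.
Open Scope R_scope.

Record C := mkC { Re : R; Im : R }.
Definition RtoC (x : R) : C := mkC x 0.
Definition C0 : C := RtoC 0.
Definition C1 : C := RtoC 1.
Definition Cadd (z w : C) : C := mkC (Re z + Re w) (Im z + Im w).
Definition Copp (z : C) : C := mkC (- Re z) (- Im z).
Definition Csub (z w : C) : C := Cadd z (Copp w).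
Definition Cmul (z w : C) : C :=
  mkC (Re z * Re w - Im z * Im w) (Re z * Im w + Im z * Re w).
Definition Cinv (z : C) : C :=
  let d := Re z * Re z + Im z * Im z in mkC (Re z / d) (- Im z / d).
Definition Cdiv (z w : C) : C := Cmul z (Cinv w).
Definition Cconj (z : C) : C := mkC (Re z) (- Im z).

(* ---------- n x n matrices (entries indexed by i, j < n) ---------- *)
Definition Mat := nat -> nat -> C.
Fixpoint Csum (f : nat -> C) (k : nat) : C :=
  match k with O => C0 | S k => Cadd (Csum f k) (f k) end.
Definition mmul (n : nat) (A B : Mat) : Mat :=
  fun i j => Csum (fun k => Cmul (A i k) (B k j)) n.
Definition madd (A B : Mat) : Mat := fun i j => Cadd (A i j) (B i j).
Definition mscal (c : C) (A : Mat) : Mat := fun i j => Cmul c (A i j).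
Definition mid : Mat := fun i j => if Nat.eq_dec i j then C1 else C0.
Definition mzero : Mat := fun _ _ => C0.
Definition meq (n : nat) (A B : Mat) : Prop :=
  forall i j, (i < n)%nat -> (j < n)%nat -> A i j = B i j.
(* the inverse of a matrix (meaningful when it is invertible) *)
Definition minv (n : nat) (A : Mat) : Mat :=
  epsilon (inhabits mzero)
    (fun B => meq n (mmul n A B) mid /\ meq n (mmul n B A) mid).

Definition SFun := R -> R -> C.
Definition MFun := R -> R -> Mat.
Definition OneForm := (MFun * MFun)%type. (* A_rho d rho + A_v dv *)

Definition fmul (n : nat) (F G : MFun) : MFun := fun r v => mmul n (F r v) (G r v).
Definition fadd (F G : MFun) : MFun := fun r v => madd (F r v) (G r v).
Definition fscal (f : SFun) (F : MFun) : MFun := fun r v => mscal (f r v) (F r v).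
Definition fid : MFun := fun _ _ => mid.
Definition fzero : MFun := fun _ _ => mzero.

Definition mfeq (n : nat) (U : R -> R -> Prop) (F G : MFun) : Prop :=
  forall r v, U r v -> meq n (F r v) (G r v).
Definition ofeq (n : nat) (U : R -> R -> Prop) (a b : OneForm) : Prop :=
  mfeq n U (fst a) (fst b) /\ mfeq n U (snd a) (snd b).

Definition oadd (a b : OneForm) : OneForm := (fadd (fst a) (fst b), fadd (snd a) (snd b)).
Definition oscal (f : SFun) (a : OneForm) : OneForm := (fscal f (fst a), fscal f (snd a)).
Definition omulr (n : nat) (a : OneForm) (X : MFun) : OneForm :=
  (fmul n (fst a) X, fmul n (snd a) X).
(* Hodge star: star d rho = - sigma dv, star dv = d rho, so
   star (a d rho + b dv) = b d rho - sigma a dv *)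
Definition star (sigma : R) (a : OneForm) : OneForm :=
  (snd a, fscal (fun _ _ => RtoC (- sigma)) (fst a)).
Definition oapp (nat : MFun -> MFun) (a : OneForm) : OneForm :=
  (nat (fst a), nat (snd a)).

Definition sconj (cj : bool) (f : SFun) : SFun :=
  if cj then (fun r v => Cconj (f r v)) else f.

Definition open2 (U : R -> R -> Prop) : Prop :=
  forall r v, U r v -> exists d, 0 < d /\
    forall r' v', Rabs (r' - r) < d -> Rabs (v' - v) < d -> U r' v'.
Definition in_weyl_half_plane (U : R -> R -> Prop) : Prop :=
  forall r v, U r v -> 0 < r.

Definition has_pdr_R (g g' : R -> R -> R) (U : R -> R -> Prop) : Prop :=
  forall r v, U r v -> derivable_pt_lim (fun x => g x v) r (g' r v).
Definition has_pdv_R (g g' : R -> R -> R) (U : R -> R -> Prop) : Prop :=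
  forall r v, U r v -> derivable_pt_lim (fun y => g r y) v (g' r v).
Definition has_pdr_M (n : nat) (F F' : MFun) (U : R -> R -> Prop) : Prop :=
  forall i j, (i < n)%nat -> (j < n)%nat ->
    has_pdr_R (fun r v => Re (F r v i j)) (fun r v => Re (F' r v i j)) U /\
    has_pdr_R (fun r v => Im (F r v i j)) (fun r v => Im (F' r v i j)) U.
Definition has_pdv_M (n : nat) (F F' : MFun) (U : R -> R -> Prop) : Prop :=
  forall i j, (i < n)%nat -> (j < n)%nat ->
    has_pdv_R (fun r v => Re (F r v i j)) (fun r v => Re (F' r v i j)) U /\
    has_pdv_R (fun r v => Im (F r v i j)) (fun r v => Im (F' r v i j)) U.

Definition pdr_R (g : R -> R -> R) : R -> R -> R :=
  fun r v => epsilon (inhabits 0) (fun l => derivable_pt_lim (fun x => g x v) r l).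
Definition pdv_R (g : R -> R -> R) : R -> R -> R :=
  fun r v => epsilon (inhabits 0) (fun l => derivable_pt_lim (fun y => g r y) v l).
Definition pdr_C (f : SFun) : SFun :=
  fun r v => mkC (pdr_R (fun a b => Re (f a b)) r v) (pdr_R (fun a b => Im (f a b)) r v).
Definition pdv_C (f : SFun) : SFun :=
  fun r v => mkC (pdv_R (fun a b => Re (f a b)) r v) (pdv_R (fun a b => Im (f a b)) r v).
Definition pdr_M (F : MFun) : MFun := fun r v i j => pdr_C (fun a b => F a b i j) r v.
Definition pdv_M (F : MFun) : MFun := fun r v i j => pdv_C (fun a b => F a b i j) r v.
Definition dM (F : MFun) : OneForm := (pdr_M F, pdv_M F).

Definition cont_on (g : R -> R -> R) (U : R -> R -> Prop) : Prop :=
  forall r v, U r v -> forall eps, 0 < eps -> exists d, 0 < d /\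
    forall r' v', Rabs (r' - r) < d -> Rabs (v' - v) < d ->
      Rabs (g r' v' - g r v) < eps.
Fixpoint CkR (k : nat) (g : R -> R -> R) (U : R -> R -> Prop) : Prop :=
  match k with
  | O => cont_on g U
  | S k' => cont_on g U /\
      (forall r v, U r v ->
         (exists l, derivable_pt_lim (fun x => g x v) r l) /\
         (exists l, derivable_pt_lim (fun y => g r y) v l)) /\
      CkR k' (pdr_R g) U /\ CkR k' (pdv_R g) U
  end.
Definition CkC (k : nat) (f : SFun) (U : R -> R -> Prop) : Prop :=
  CkR k (fun r v => Re (f r v)) U /\ CkR k (fun r v => Im (f r v)) U.
Definition CkM (n k : nat) (F : MFun) (U : R -> R -> Prop) : Prop :=
  forall i j, (i < n)%nat -> (j < n)%nat -> CkC k (fun r v => F r v i j) U.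
Definition CinfC (f : SFun) (U : R -> R -> Prop) : Prop := forall k, CkC k f U.

Definition natural_op (n : nat) (U : R -> R -> Prop) (sigma : R) (cj : bool)
  (nat : MFun -> MFun) : Prop :=
  (* it is a map on matrix functions on U: depends only on values on U *)
  (forall N1 N2, mfeq n U N1 N2 -> mfeq n U (nat N1) (nat N2)) /\
  (forall N, mfeq n U (nat (nat N)) N) /\
  (forall N1 N2, mfeq n U (nat (fmul n N1 N2)) (fmul n (nat N2) (nat N1))) /\
  (forall N1 N2, mfeq n U (nat (fadd N1 N2)) (fadd (nat N1) (nat N2))) /\
  (forall (f : SFun) N, mfeq n U (nat (fscal f N)) (fscal (sconj cj f) (nat N))) /\
  (forall N N', has_pdr_M n N N' U -> has_pdr_M n (nat N) (nat N') U) /\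
  (forall N N', has_pdv_M n N N' U -> has_pdv_M n (nat N) (nat N') U) /\
  (forall a : OneForm, ofeq n U (oapp nat (star sigma a)) (star sigma (oapp nat a))).

Definition invertible_Ck (n k : nat) (X : MFun) (U : R -> R -> Prop) : Prop :=
  exists Xi : MFun, CkM n k Xi U /\ mfeq n U (fmul n X Xi) fid /\ mfeq n U (fmul n Xi X) fid.
Definition invertible_on (n : nat) (X : MFun) (U : R -> R -> Prop) : Prop :=
  exists Xi : MFun, mfeq n U (fmul n X Xi) fid /\ mfeq n U (fmul n Xi X) fid.

Definition root_form (U : R -> R -> Prop) (sigma : R) (phi : SFun) : Prop :=
  exists (omega : C) (e : R) (s : SFun),
    (e = 1 \/ e = -1) /\ CkC 0 s U /\
    (forall r v, U r v ->
       Cmul (s r v) (s r v) =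
       Cadd (Cmul (Csub omega (RtoC v)) (Csub omega (RtoC v))) (RtoC (sigma * (r * r)))) /\
    (forall r v, U r v ->
       phi r v = Cdiv (Cadd (Cmul (RtoC (- sigma)) (Csub omega (RtoC v)))
                            (Cmul (RtoC e) (s r v)))
                      (RtoC r)).

Definition Mof (n : nat) (nat : MFun -> MFun) (V : MFun) : MFun := fmul n (nat V) V.
Definition Aof (n : nat) (M : MFun) : OneForm :=
  (fun r v => mmul n (minv n (M r v)) (pdr_M M r v),
   fun r v => mmul n (minv n (M r v)) (pdv_M M r v)).

(* Main.v *)
Require Import Defs.
From Stdlib Require Import Reals Lra Lia ClassicalEpsilon FunctionalExtensionality Setoid Morphisms Field.
Import Defs.
Open Scope R_scope.

Lemma C_ext (a b : C) : Re a = Re b -> Im a = Im b -> a = b.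
Proof. destruct a, b; simpl; intros; subst; reflexivity. Qed.

Lemma C_ring : ring_theory C0 C1 Cadd Cmul Csub Copp (@eq C).
Proof.
  constructor; intros; apply C_ext; repeat match goal with x : C |- _ => destruct x end; simpl; ring.
Qed.

Lemma C1_neq_C0 : C1 <> C0.
Proof. intro H. injection H. lra. Qed.

Lemma C_field : field_theory C0 C1 Cadd Cmul Csub Copp Cdiv Cinv (@eq C).
Proof.
  constructor.
  - exact C_ring.
  - exact C1_neq_C0.
  - reflexivity.
  - intros [a b] Hp. assert (Hd : a*a+b*b <> 0).
    { intro H0. apply Hp. assert (a = 0) by nra. assert (b = 0) by nra. subst. reflexivity. }
    apply C_ext; simpl; field; auto.
Qed.
Add Field Cfield : C_field.

Lemma Csum_ext f g m : (forall k, (k < m)%nat -> f k = g k) -> Csum f m = Csum g m.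
Proof. induction m; simpl; intros H; auto. rewrite IHm by auto. rewrite H by auto. reflexivity. Qed.

Lemma Csum_add f g m : Csum (fun k => Cadd (f k) (g k)) m = Cadd (Csum f m) (Csum g m).
Proof. induction m; simpl. apply C_ext; simpl; ring. rewrite IHm. ring. Qed.

Lemma Csum_scal c f m : Csum (fun k => Cmul c (f k)) m = Cmul c (Csum f m).
Proof. induction m; simpl. apply C_ext; simpl; ring. rewrite IHm. ring. Qed.

Lemma Csum_scalr c f m : Csum (fun k => Cmul (f k) c) m = Cmul (Csum f m) c.
Proof. induction m; simpl. apply C_ext; simpl; ring. rewrite IHm. ring. Qed.

Lemma Csum_swap (f : nat -> nat -> C) m1 m2 :
  Csum (fun k => Csum (fun l => f k l) m2) m1 = Csum (fun l => Csum (fun k => f k l) m1) m2.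
Proof.
  induction m1; simpl.
  - induction m2; simpl; auto. rewrite <- IHm2. apply C_ext; simpl; ring.
  - rewrite IHm1. rewrite <- Csum_add. reflexivity.
Qed.

Lemma Csum_delta (f : nat -> C) i m : (i < m)%nat ->
  Csum (fun k => Cmul (if Nat.eq_dec i k then C1 else C0) (f k)) m = f i.
Proof.
  induction m; intros Hi; [lia|]. simpl.
  destruct (Nat.eq_dec i m).
  - subst. rewrite (Csum_ext _ (fun _ => C0)).
    + assert (Hz : forall p, Csum (fun _ => C0) p = C0) by (induction p; simpl; auto; rewrite IHp; ring).
      rewrite Hz. ring.
    + intros k Hk. destruct (Nat.eq_dec m k); [lia|]. ring.
  - rewrite IHm by lia. ring.
Qed.

Lemma Csum_delta_r (f : nat -> C) j m : (j < m)%nat ->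
  Csum (fun k => Cmul (f k) (if Nat.eq_dec k j then C1 else C0)) m = f j.
Proof.
  induction m; intros Hi; [lia|]. simpl.
  destruct (Nat.eq_dec m j).
  - subst. rewrite (Csum_ext _ (fun _ => C0)).
    + assert (Hz : forall p, Csum (fun _ => C0) p = C0) by (induction p; simpl; auto; rewrite IHp; ring).
      rewrite Hz. ring.
    + intros k Hk. destruct (Nat.eq_dec k j); [lia|]. ring.
  - rewrite IHm by lia. ring.
Qed.

Lemma mmul_assoc n A B D : mmul n (mmul n A B) D = mmul n A (mmul n B D).
Proof.
  apply functional_extensionality; intro i; apply functional_extensionality; intro j.
  unfold mmul.
  transitivity (Csum (fun k => Csum (fun l => Cmul (A i l) (Cmul (B l k) (D k j))) n) n).
  - apply Csum_ext; intros k _. rewrite <- Csum_scalr. apply Csum_ext; intros; ring.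
  - rewrite Csum_swap. apply Csum_ext; intros. rewrite Csum_scal. reflexivity.
Qed.

Lemma mmul_addl n A B D : mmul n (madd A B) D = madd (mmul n A D) (mmul n B D).
Proof.
  apply functional_extensionality; intro i; apply functional_extensionality; intro j.
  unfold mmul, madd. rewrite <- Csum_add. apply Csum_ext; intros; ring.
Qed.
Lemma mmul_addr n A B D : mmul n D (madd A B) = madd (mmul n D A) (mmul n D B).
Proof.
  apply functional_extensionality; intro i; apply functional_extensionality; intro j.
  unfold mmul, madd. rewrite <- Csum_add. apply Csum_ext; intros; ring.
Qed.
Lemma mmul_scall n c A B : mmul n (mscal c A) B = mscal c (mmul n A B).
Proof.
  apply functional_extensionality; intro i; apply functional_extensionality; intro j.
  unfold mmul, mscal. rewrite <- Csum_scal. apply Csum_ext; intros; ring.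
Qed.
Lemma mmul_scalr n c A B : mmul n A (mscal c B) = mscal c (mmul n A B).
Proof.
  apply functional_extensionality; intro i; apply functional_extensionality; intro j.
  unfold mmul, mscal. rewrite <- Csum_scal. apply Csum_ext; intros; ring.
Qed.

Lemma mmul_idl n A : meq n (mmul n mid A) A.
Proof. intros i j Hi Hj. unfold mmul, mid. apply (Csum_delta (fun k => A k j)); auto. Qed.
Lemma mmul_idr n A : meq n (mmul n A mid) A.
Proof. intros i j Hi Hj. unfold mmul, mid. apply (Csum_delta_r (fun k => A i k)); auto. Qed.

Instance meq_equiv n : Equivalence (meq n).
Proof.
  constructor.
  - intros A i j _ _; reflexivity.
  - intros A B H i j Hi Hj; symmetry; auto.
  - intros A B D H1 H2 i j Hi Hj; rewrite H1, H2; auto.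
Qed.
Instance madd_proper n : Proper (meq n ==> meq n ==> meq n) madd.
Proof. intros A A' H B B' H' i j Hi Hj; unfold madd; rewrite H, H'; auto. Qed.
Instance mscal_proper n c : Proper (meq n ==> meq n) (mscal c).
Proof. intros A A' H i j Hi Hj; unfold mscal; rewrite H; auto. Qed.
Instance mmul_proper n : Proper (meq n ==> meq n ==> meq n) (mmul n).
Proof.
  intros A A' H B B' H' i j Hi Hj; unfold mmul. apply Csum_ext; intros k Hk.
  rewrite H, H'; auto.
Qed.

Instance mfeq_equiv n U : Equivalence (mfeq n U).
Proof.
  constructor.
  - intros A r v _; reflexivity.
  - intros A B H r v Hu; symmetry; auto.
  - intros A B D H1 H2 r v Hu; rewrite (H1 r v Hu), (H2 r v Hu); reflexivity.
Qed.
Instance fadd_proper n U : Proper (mfeq n U ==> mfeq n U ==> mfeq n U) fadd.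
Proof. intros A A' H B B' H' r v Hu; unfold fadd; rewrite (H r v Hu), (H' r v Hu); reflexivity. Qed.
Instance fscal_proper n U f : Proper (mfeq n U ==> mfeq n U) (fscal f).
Proof. intros A A' H r v Hu; unfold fscal; rewrite (H r v Hu); reflexivity. Qed.
Instance fmul_proper n U : Proper (mfeq n U ==> mfeq n U ==> mfeq n U) (fmul n).
Proof. intros A A' H B B' H' r v Hu; unfold fmul; rewrite (H r v Hu), (H' r v Hu); reflexivity. Qed.

Lemma fmul_assoc n A B D : fmul n (fmul n A B) D = fmul n A (fmul n B D).
Proof. unfold fmul. apply functional_extensionality; intro r; apply functional_extensionality; intro v. apply mmul_assoc. Qed.
Definition dC (f : R -> C) (x : R) (l : C) : Prop :=
  derivable_pt_lim (fun t => Re (f t)) x (Re l) /\ derivable_pt_lim (fun t => Im (f t)) x (Im l).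

Lemma dpl_eq f x l l' : derivable_pt_lim f x l -> l = l' -> derivable_pt_lim f x l'.
Proof. intros H ->; exact H. Qed.

Lemma dC_eq f x l l' : dC f x l -> l = l' -> dC f x l'.
Proof. intros H ->; exact H. Qed.

Lemma dC_add f g x l1 l2 : dC f x l1 -> dC g x l2 -> dC (fun t => Cadd (f t) (g t)) x (Cadd l1 l2).
Proof.
  intros [H1 H2] [H3 H4]; split; simpl.
  - exact (derivable_pt_lim_plus _ _ _ _ _ H1 H3).
  - exact (derivable_pt_lim_plus _ _ _ _ _ H2 H4).
Qed.

Lemma dC_mul f g x l1 l2 : dC f x l1 -> dC g x l2 ->
  dC (fun t => Cmul (f t) (g t)) x (Cadd (Cmul l1 (g x)) (Cmul (f x) l2)).
Proof.
  intros [H1 H2] [H3 H4]; split; simpl.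
  - eapply dpl_eq.
    + exact (derivable_pt_lim_minus _ _ _ _ _ (derivable_pt_lim_mult _ _ _ _ _ H1 H3)
                                              (derivable_pt_lim_mult _ _ _ _ _ H2 H4)).
    + simpl; ring.
  - eapply dpl_eq.
    + exact (derivable_pt_lim_plus _ _ _ _ _ (derivable_pt_lim_mult _ _ _ _ _ H1 H4)
                                              (derivable_pt_lim_mult _ _ _ _ _ H2 H3)).
    + simpl; ring.
Qed.

Lemma dC_C0 x : dC (fun _ => C0) x C0.
Proof. split; simpl; apply derivable_pt_lim_const. Qed.

Lemma dC_sum_mul (f g : R -> nat -> C) f' g' x n :
  (forall k, (k < n)%nat -> dC (fun t => f t k) x (f' k)) ->
  (forall k, (k < n)%nat -> dC (fun t => g t k) x (g' k)) ->
  dC (fun t => Csum (fun k => Cmul (f t k) (g t k)) n) x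
     (Csum (fun k => Cadd (Cmul (f' k) (g x k)) (Cmul (f x k) (g' k))) n).
Proof.
  intros Hf Hg. induction n; simpl.
  - apply dC_C0.
  - apply dC_add.
    + apply IHn; intros; [apply Hf|apply Hg]; lia.
    + apply dC_mul; [apply Hf|apply Hg]; lia.
Qed.

Lemma dC_local f g x l d : 0 < d -> (forall t, Rabs (t - x) < d -> f t = g t) ->
  dC f x l -> dC g x l.
Proof.
  intros Hd Hfg [H1 H2].
  assert (G : forall (p q : R -> R) l0, (forall t, Rabs (t - x) < d -> p t = q t) ->
            derivable_pt_lim p x l0 -> derivable_pt_lim q x l0).
  { intros p q l0 Hpq Hp eps Heps. destruct (Hp eps Heps) as [del Hdel].
    assert (Hm : 0 < Rmin del d) by (apply Rmin_pos; [apply cond_pos|auto]).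
    exists (mkposreal _ Hm). intros h Hh0 Hh. simpl in Hh.
    rewrite <- !Hpq.
    - apply Hdel; auto. eapply Rlt_le_trans; [exact Hh|apply Rmin_l].
    - rewrite Rminus_diag, Rabs_R0; auto.
    - replace (x + h - x) with h by ring. eapply Rlt_le_trans; [exact Hh|apply Rmin_r]. }
  split.
  - apply (G (fun t => Re (f t))); auto. intros t Ht; rewrite Hfg; auto.
  - apply (G (fun t => Im (f t))); auto. intros t Ht; rewrite Hfg; auto.
Qed.

Lemma dC_unique f x l1 l2 : dC f x l1 -> dC f x l2 -> l1 = l2.
Proof.
  intros [H1 H2] [H3 H4]. apply C_ext; eapply uniqueness_limite; eauto.
Qed.

Lemma pdr_iff n F F' U : has_pdr_M n F F' U <->
  (forall i j r v, (i < n)%nat -> (j < n)%nat -> U r v -> dC (fun x => F x v i j) r (F' r v i j)).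
Proof.
  unfold has_pdr_M, has_pdr_R, dC; split.
  - intros H i j r v Hi Hj Hu. destruct (H i j Hi Hj) as [A B]. split; auto.
  - intros H i j Hi Hj. split; intros r v Hu; apply (H i j r v Hi Hj Hu).
Qed.
Lemma pdv_iff n F F' U : has_pdv_M n F F' U <->
  (forall i j r v, (i < n)%nat -> (j < n)%nat -> U r v -> dC (fun y => F r y i j) v (F' r v i j)).
Proof.
  unfold has_pdv_M, has_pdv_R, dC; split.
  - intros H i j r v Hi Hj Hu. destruct (H i j Hi Hj) as [A B]. split; auto.
  - intros H i j Hi Hj. split; intros r v Hu; apply (H i j r v Hi Hj Hu).
Qed.

Lemma pdr_prod n U F F' G G' : has_pdr_M n F F' U -> has_pdr_M n G G' U ->
  has_pdr_M n (fmul n F G) (fadd (fmul n F' G) (fmul n F G')) U.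
Proof.
  rewrite !pdr_iff. intros HF HG i j r v Hi Hj Hu.
  unfold fmul, fadd, mmul, madd.
  eapply dC_eq.
  - apply (dC_sum_mul (fun t k => F t v i k) (fun t k => G t v k j)); intros; [apply HF|apply HG]; auto.
  - rewrite Csum_add. reflexivity.
Qed.
Lemma pdv_prod n U F F' G G' : has_pdv_M n F F' U -> has_pdv_M n G G' U ->
  has_pdv_M n (fmul n F G) (fadd (fmul n F' G) (fmul n F G')) U.
Proof.
  rewrite !pdv_iff. intros HF HG i j r v Hi Hj Hu.
  unfold fmul, fadd, mmul, madd.
  eapply dC_eq.
  - apply (dC_sum_mul (fun t k => F r t i k) (fun t k => G r t k j)); intros; [apply HF|apply HG]; auto.
  - rewrite Csum_add. reflexivity.
Qed.

Lemma pdr_local n U F G F' : open2 U -> mfeq n U F G -> has_pdr_M n F F' U -> has_pdr_M n G F' U.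
Proof.
  rewrite !pdr_iff. intros HU Heq H i j r v Hi Hj Hu.
  destruct (HU r v Hu) as [d [Hd Hb]].
  apply (dC_local (fun x => F x v i j) _ _ _ d Hd); auto.
  intros t Ht. apply Heq; auto. apply Hb; auto. rewrite Rminus_diag, Rabs_R0; auto.
Qed.
Lemma pdv_local n U F G F' : open2 U -> mfeq n U F G -> has_pdv_M n F F' U -> has_pdv_M n G F' U.
Proof.
  rewrite !pdv_iff. intros HU Heq H i j r v Hi Hj Hu.
  destruct (HU r v Hu) as [d [Hd Hb]].
  apply (dC_local (fun y => F r y i j) _ _ _ d Hd); auto.
  intros t Ht. apply Heq; auto. apply Hb; auto. rewrite Rminus_diag, Rabs_R0; auto.
Qed.

Lemma pdr_unique n U F F1 F2 : has_pdr_M n F F1 U -> has_pdr_M n F F2 U -> mfeq n U F1 F2.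
Proof. rewrite !pdr_iff. intros H1 H2 r v Hu i j Hi Hj. eapply dC_unique; eauto. Qed.
Lemma pdv_unique n U F F1 F2 : has_pdv_M n F F1 U -> has_pdv_M n F F2 U -> mfeq n U F1 F2.
Proof. rewrite !pdv_iff. intros H1 H2 r v Hu i j Hi Hj. eapply dC_unique; eauto. Qed.

Lemma pdr_subst n U F F1 F2 : has_pdr_M n F F1 U -> mfeq n U F1 F2 -> has_pdr_M n F F2 U.
Proof. rewrite !pdr_iff. intros H1 H2 i j r v Hi Hj Hu. rewrite <- (H2 r v Hu i j Hi Hj); auto. Qed.
Lemma pdv_subst n U F F1 F2 : has_pdv_M n F F1 U -> mfeq n U F1 F2 -> has_pdv_M n F F2 U.
Proof. rewrite !pdv_iff. intros H1 H2 i j r v Hi Hj Hu. rewrite <- (H2 r v Hu i j Hi Hj); auto. Qed.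

Lemma pdr_eps n U F F1 : has_pdr_M n F F1 U -> has_pdr_M n F (pdr_M F) U.
Proof.
  unfold has_pdr_M, has_pdr_R. intros H i j Hi Hj. destruct (H i j Hi Hj) as [A B].
  split; intros r v Hu; simpl; unfold pdr_R; apply epsilon_spec; eauto.
Qed.
Lemma pdv_eps n U F F1 : has_pdv_M n F F1 U -> has_pdv_M n F (pdv_M F) U.
Proof.
  unfold has_pdv_M, has_pdv_R. intros H i j Hi Hj. destruct (H i j Hi Hj) as [A B].
  split; intros r v Hu; simpl; unfold pdv_R; apply epsilon_spec; eauto.
Qed.

Lemma Ck_pd n k F U : CkM n (S k) F U -> has_pdr_M n F (pdr_M F) U /\ has_pdv_M n F (pdv_M F) U.
Proof.
  unfold CkM, CkC. intros H. split; intros i j Hi Hj; destruct (H i j Hi Hj) as [A B];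
  simpl in A, B; destruct A as [_ [A _]]; destruct B as [_ [B _]];
  split; intros r v Hu; unfold pdr_M, pdv_M, pdr_C, pdv_C; simpl; unfold pdr_R, pdv_R; apply epsilon_spec;
  first [apply (A r v Hu) | apply (B r v Hu)].
Qed.
Definition cs (cj : bool) (z : C) : C := if cj then Cconj z else z.
Lemma sconj_cs cj (f : SFun) r v : sconj cj f r v = cs cj (f r v).
Proof. destruct cj; reflexivity. Qed.
Lemma cs_add cj a b : cs cj (Cadd a b) = Cadd (cs cj a) (cs cj b).
Proof. destruct cj; simpl; auto. apply C_ext; simpl; ring. Qed.
Lemma cs_mul cj a b : cs cj (Cmul a b) = Cmul (cs cj a) (cs cj b).
Proof. destruct cj; simpl; auto. apply C_ext; simpl; ring. Qed.
Lemma cs_opp cj a : cs cj (Copp a) = Copp (cs cj a).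
Proof. destruct cj; simpl; auto. Qed.
Lemma cs_inv cj a : cs cj (Cinv a) = Cinv (cs cj a).
Proof.
  destruct cj; simpl; auto. destruct a as [x y]. unfold Cinv, Cconj; simpl.
  replace (- y * - y) with (y * y) by ring. apply C_ext; simpl; auto. unfold Rdiv; ring.
Qed.
Lemma cs_R cj x : cs cj (RtoC x) = RtoC x.
Proof. destruct cj; simpl; auto. apply C_ext; simpl; ring. Qed.
Lemma cs_invol cj a : cs cj (cs cj a) = a.
Proof. destruct cj; simpl; auto. apply C_ext; simpl; ring. Qed.
Lemma RtoC_opp x : RtoC (- x) = Copp (RtoC x).
Proof. apply C_ext; simpl; ring. Qed.

Definition c1f (p s : C) := Copp (Cdiv (Cmul p p) (Cadd (Cmul p p) s)).
Definition c2f (p s : C) := Copp (Cdiv p (Cadd (Cmul p p) s)).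
Definition e1f (p s : C) := Cdiv (Cmul s p) (Cadd (Cmul p p) s).
Definition e2f (p s : C) := Copp (Cdiv (Cmul p p) (Cadd (Cmul p p) s)).

Lemma cs_c1 cj p x : cs cj (c1f p (RtoC x)) = c1f (cs cj p) (RtoC x).
Proof. unfold c1f, Cdiv. rewrite cs_opp, cs_mul, cs_inv, cs_add, cs_mul, cs_R. reflexivity. Qed.
Lemma cs_c2 cj p x : cs cj (c2f p (RtoC x)) = c2f (cs cj p) (RtoC x).
Proof. unfold c2f, Cdiv. rewrite cs_opp, cs_mul, cs_inv, cs_add, cs_mul, cs_R. reflexivity. Qed.
Lemma cs_e1 cj p x : cs cj (e1f p (RtoC x)) = e1f (cs cj p) (RtoC x).
Proof. unfold e1f, Cdiv. rewrite cs_mul, cs_inv, cs_add, !cs_mul, cs_R. reflexivity. Qed.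
Lemma cs_e2 cj p x : cs cj (e2f p (RtoC x)) = e2f (cs cj p) (RtoC x).
Proof. unfold e2f, Cdiv. rewrite cs_opp, cs_mul, cs_inv, cs_add, cs_mul, cs_R. reflexivity. Qed.

Lemma solve_lin (p s x1 xv a b : C) : Cadd (Cmul p p) s <> C0 ->
  Cmul p (Cadd x1 a) = xv -> Cmul p (Cadd xv b) = Cmul (Copp s) x1 ->
  x1 = Cadd (Cmul (c1f p s) a) (Cmul (c2f p s) b) /\
  xv = Cadd (Cmul (e1f p s) a) (Cmul (e2f p s) b).
Proof.
  intros Hd H1 H2. subst xv.
  assert (H : Cmul x1 (Cadd (Cmul p p) s) = Copp (Cadd (Cmul (Cmul p p) a) (Cmul p b))).
  { transitivity (Csub (Cmul x1 (Cadd (Cmul p p) s)) (Csub (Cmul p (Cadd (Cmul p (Cadd x1 a)) b)) (Cmul (Copp s) x1))).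
    - rewrite H2. ring.
    - ring. }
  assert (Hx : x1 = Cdiv (Copp (Cadd (Cmul (Cmul p p) a) (Cmul p b))) (Cadd (Cmul p p) s)).
  { rewrite <- H. field. auto. }
  unfold c1f, c2f, e1f, e2f. rewrite Hx. split; field; auto.
Qed.

Lemma C1_RtoC : RtoC 1 = C1.
Proof. reflexivity. Qed.
Lemma Cm1_RtoC : RtoC (-1) = Copp C1.
Proof. apply C_ext; simpl; ring. Qed.

Lemma scal_ids (sg : R) (p : C) : (sg = 1 \/ sg = -1) -> p <> C0 ->
  Cadd (Cmul p p) (RtoC sg) <> C0 ->
  let y := Cdiv (Copp (RtoC sg)) p in
  let s := RtoC sg in
  Cadd (Cadd (c1f y s) C1) (c1f p s) = C0 /\
  Cadd (Cadd (c2f y s) C0) (c2f p s) = C0 /\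
  Cadd (Cadd (e1f y s) C0) (e1f p s) = C0 /\
  Cadd (Cadd (e2f y s) C1) (e2f p s) = C0.
Proof.
  intros Hs Hp Hd y s. subst y s. unfold c1f, c2f, e1f, e2f.
  destruct Hs as [-> | ->]; [rewrite C1_RtoC in * | rewrite Cm1_RtoC in *].
  - repeat split; field; repeat split; auto.
  - repeat split; field; repeat split; auto. all: intro E; apply Hd; pose proof (f_equal Re E) as E1; pose proof (f_equal Im E) as E2; apply C_ext; simpl in *; lra.
Qed.

Lemma key n T T1 M M1 X X1 Ar Av nAr nAv d1 d2 k1 k2 c1 c2 :
 meq n T1 (madd (mscal d1 (mmul n T nAr)) (mscal d2 (mmul n T nAv))) ->
 meq n (mmul n nAr M) (mmul n M Ar) -> meq n (mmul n nAv M) (mmul n M Av) ->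
 meq n M1 (madd (mscal k1 (mmul n M Ar)) (mscal k2 (mmul n M Av))) ->
 meq n X1 (madd (mscal c1 (mmul n Ar X)) (mscal c2 (mmul n Av X))) ->
 Cadd (Cadd d1 k1) c1 = C0 -> Cadd (Cadd d2 k2) c2 = C0 ->
 meq n (madd (mmul n (madd (mmul n T1 M) (mmul n T M1)) X) (mmul n (mmul n T M) X1)) mzero.
Proof.
  intros H1 H2 H3 H4 H5 E1 E2.
  assert (HT: meq n (mmul n T1 M) (madd (mscal d1 (mmul n T (mmul n M Ar))) (mscal d2 (mmul n T (mmul n M Av))))).
  { rewrite H1, mmul_addl, !mmul_scall, !mmul_assoc, H2, H3. reflexivity. }
  rewrite HT, H4, H5.
  repeat rewrite ?mmul_addl, ?mmul_addr, ?mmul_scall, ?mmul_scalr, ?mmul_assoc.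
  intros i j Hi Hj. unfold madd, mscal, mzero.
  set (P := mmul n T (mmul n M (mmul n Ar X)) i j).
  set (Q := mmul n T (mmul n M (mmul n Av X)) i j).
  transitivity (Cadd (Cmul (Cadd (Cadd d1 k1) c1) P) (Cmul (Cadd (Cadd d2 k2) c2) Q)).
  - ring.
  - rewrite E1, E2. unfold C0, RtoC. apply C_ext; simpl; ring.
Qed.

Lemma Xsolve n U sigma (p : SFun) (A : OneForm) (X : MFun) :
  (forall r v, U r v -> Cadd (Cmul (p r v) (p r v)) (RtoC sigma) <> C0) ->
  ofeq n U (oscal p (oadd (dM X) (omulr n A X))) (star sigma (dM X)) ->
  mfeq n U (pdr_M X) (fadd (fscal (fun r v => c1f (p r v) (RtoC sigma)) (fmul n (fst A) X))
                            (fscal (fun r v => c2f (p r v) (RtoC sigma)) (fmul n (snd A) X))) /\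
  mfeq n U (pdv_M X) (fadd (fscal (fun r v => e1f (p r v) (RtoC sigma)) (fmul n (fst A) X))
                            (fscal (fun r v => e2f (p r v) (RtoC sigma)) (fmul n (snd A) X))).
Proof.
  intros Hd [E1 E2].
  assert (G : forall r v, U r v -> forall i j, (i < n)%nat -> (j < n)%nat ->
     pdr_M X r v i j = Cadd (Cmul (c1f (p r v) (RtoC sigma)) (fmul n (fst A) X r v i j))
                             (Cmul (c2f (p r v) (RtoC sigma)) (fmul n (snd A) X r v i j)) /\
     pdv_M X r v i j = Cadd (Cmul (e1f (p r v) (RtoC sigma)) (fmul n (fst A) X r v i j))
                             (Cmul (e2f (p r v) (RtoC sigma)) (fmul n (snd A) X r v i j))).
  { intros r v Hu i j Hi Hj.
    pose proof (E1 r v Hu i j Hi Hj) as h1. pose proof (E2 r v Hu i j Hi Hj) as h2.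
    unfold oscal, oadd, omulr, star, dM in h1, h2. cbn [fst snd] in h1, h2.
    unfold fscal, fadd, mscal, madd in h1, h2. rewrite RtoC_opp in h2.
    apply solve_lin; auto. }
  split; intros r v Hu i j Hi Hj; destruct (G r v Hu i j Hi Hj) as [g1 g2];
    unfold fadd, fscal, madd, mscal; auto.
Qed.

Theorem mainTheorem8 (n : nat) (sigma : R) (U : R -> R -> Prop)
  (cj : bool) (nat : MFun -> MFun) (V : MFun) (phi chi : SFun) (X Xt : MFun) :
  (sigma = 1 \/ sigma = -1) ->
  open2 U -> in_weyl_half_plane U ->
  natural_op n U sigma cj nat ->
  CkM n 2 V U -> invertible_on n V U ->
  CinfC phi U -> CinfC chi U ->
  root_form U sigma phi -> root_form U sigma chi ->
  (forall r v, U r v -> phi r v <> C0) ->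
  (forall r v, U r v -> chi r v <> C0) ->
  (forall r v, U r v -> Cadd (Cmul (phi r v) (phi r v)) (RtoC sigma) <> C0) ->
  (forall r v, U r v -> Cadd (Cmul (chi r v) (chi r v)) (RtoC sigma) <> C0) ->
  (forall r v, U r v -> chi r v = Cdiv (RtoC (- sigma)) (sconj cj phi r v)) ->
  CkM n 2 X U -> invertible_Ck n 1 X U ->
  CkM n 2 Xt U -> invertible_Ck n 1 Xt U ->
  ofeq n U (oscal phi (oadd (dM X) (omulr n (Aof n (Mof n nat V)) X))) (star sigma (dM X)) ->
  ofeq n U (oscal chi (oadd (dM Xt) (omulr n (Aof n (Mof n nat V)) Xt))) (star sigma (dM Xt)) ->
  let Mcal := fmul n (fmul n (nat Xt) (Mof n nat V)) X in
  has_pdr_M n Mcal fzero U /\ has_pdv_M n Mcal fzero U.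
Proof.
  intros Hs HU Hw Hnat HV HVi Hphi Hchi Rphi Rchi Hp0 Hc0 Hpd Hcd Hcp HX HXi HXt HXti EX EXt Mcal.
  destruct Hnat as (Ncong & Ninv & Nmul & Nadd & Nscal & Npdr & Npdv & _).
  destruct (Xsolve n U sigma phi _ X Hpd EX) as [SXr SXv].
  destruct (Xsolve n U sigma chi _ Xt Hcd EXt) as [STr STv].
  clear EX EXt.
  set (M := Mof n nat V) in *.
  set (Ar := fst (Aof n M)) in *.
  set (Av := snd (Aof n M)) in *.
  unfold Mcal; clear Mcal.
  assert (Nid : mfeq n U (nat fid) fid).
  { symmetry. transitivity (nat (nat fid)); [symmetry; apply Ninv|].
    transitivity (nat (fmul n fid (nat fid))).
    { apply Ncong. intros r v Hu. unfold fmul, fid. symmetry. apply mmul_idl. }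
    rewrite Nmul. rewrite (Ninv fid). intros r v Hu. unfold fmul, fid. apply mmul_idl. }
  assert (natM : mfeq n U (nat M) M).
  { unfold M, Mof. rewrite Nmul. rewrite (Ninv V). reflexivity. }
  assert (Minv : forall r v, U r v -> meq n (mmul n (M r v) (minv n (M r v))) mid).
  { destruct HVi as [Vi [HV1 HV2]].
    assert (NV1 : mfeq n U (fmul n (nat V) (nat Vi)) fid).
    { rewrite <- Nmul. rewrite (Ncong _ _ HV2). exact Nid. }
    intros r v Hu.
    assert (HB : meq n (mmul n (M r v) (mmul n (Vi r v) (nat Vi r v))) mid).
    { pose proof (HV1 r v Hu) as h1. pose proof (NV1 r v Hu) as h2. unfold fmul, fid in h1, h2.
      unfold M, Mof, fmul. rewrite mmul_assoc, <- (mmul_assoc n (V r v)), h1, mmul_idl. exact h2. }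
    assert (HB' : meq n (mmul n (mmul n (Vi r v) (nat Vi r v)) (M r v)) mid).
    { assert (NV2 : mfeq n U (fmul n (nat Vi) (nat V)) fid).
      { rewrite <- Nmul. rewrite (Ncong _ _ HV1). exact Nid. }
      pose proof (HV2 r v Hu) as h1. pose proof (NV2 r v Hu) as h2. unfold fmul, fid in h1, h2.
      unfold M, Mof, fmul. rewrite mmul_assoc, <- (mmul_assoc n (nat Vi r v)), h2, mmul_idl. exact h1. }
    unfold minv.
    pose proof (epsilon_spec (inhabits mzero)
      (fun B => meq n (mmul n (M r v) B) mid /\ meq n (mmul n B (M r v)) mid)
      (ex_intro _ _ (conj HB HB'))) as [e1 _].
    exact e1. }
  destruct (Ck_pd n 1 V U HV) as [HVr HVv].
  destruct (Ck_pd n 1 X U HX) as [HXr HXv].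
  destruct (Ck_pd n 1 Xt U HXt) as [HTr HTv].
  assert (HMr : has_pdr_M n M (pdr_M M) U).
  { eapply pdr_eps. unfold M, Mof. apply pdr_prod; [apply Npdr; exact HVr | exact HVr]. }
  assert (HMv : has_pdv_M n M (pdv_M M) U).
  { eapply pdv_eps. unfold M, Mof. apply pdv_prod; [apply Npdv; exact HVv | exact HVv]. }
  assert (NMr : mfeq n U (nat (pdr_M M)) (pdr_M M)).
  { eapply pdr_unique; [|exact HMr]. eapply pdr_local; [exact HU | exact natM |]. apply Npdr; exact HMr. }
  assert (NMv : mfeq n U (nat (pdv_M M)) (pdv_M M)).
  { eapply pdv_unique; [|exact HMv]. eapply pdv_local; [exact HU | exact natM |]. apply Npdv; exact HMv. }
  assert (MAr : mfeq n U (fmul n M Ar) (pdr_M M)).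
  { intros r v Hu. unfold fmul, Ar, Aof. cbn [fst]. rewrite <- mmul_assoc, (Minv r v Hu). apply mmul_idl. }
  assert (MAv : mfeq n U (fmul n M Av) (pdv_M M)).
  { intros r v Hu. unfold fmul, Av, Aof. cbn [snd]. rewrite <- mmul_assoc, (Minv r v Hu). apply mmul_idl. }
  assert (nArM : mfeq n U (fmul n (nat Ar) M) (fmul n M Ar)).
  { transitivity (fmul n (nat Ar) (nat M)).
    { apply fmul_proper; [reflexivity | symmetry; exact natM]. }
    rewrite <- Nmul. rewrite (Ncong _ _ MAr). rewrite NMr. symmetry. exact MAr. }
  assert (nAvM : mfeq n U (fmul n (nat Av) M) (fmul n M Av)).
  { transitivity (fmul n (nat Av) (nat M)).
    { apply fmul_proper; [reflexivity | symmetry; exact natM]. }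
    rewrite <- Nmul. rewrite (Ncong _ _ MAv). rewrite NMv. symmetry. exact MAv. }
  assert (NTr := Ncong _ _ STr). rewrite Nadd, !Nscal, !Nmul in NTr.
  assert (NTv := Ncong _ _ STv). rewrite Nadd, !Nscal, !Nmul in NTv.
  assert (Hchi_s : forall r v, U r v -> cs cj (chi r v) = Cdiv (Copp (RtoC sigma)) (phi r v)).
  { intros r v Hu. rewrite (Hcp r v Hu), sconj_cs. unfold Cdiv.
    rewrite cs_mul, cs_inv, cs_invol, cs_R, RtoC_opp. reflexivity. }
  split.
  - eapply pdr_subst.
    + apply pdr_prod; [apply pdr_prod; [apply Npdr; exact HTr | exact HMr] | exact HXr].
    + intros r v Hu. unfold fadd, fmul, fzero.
      destruct (scal_ids sigma (phi r v) Hs (Hp0 r v Hu) (Hpd r v Hu)) as (E1 & E2 & E3 & E4).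
      apply key with (Ar := Ar r v) (Av := Av r v) (nAr := nat Ar r v) (nAv := nat Av r v)
        (d1 := cs cj (c1f (chi r v) (RtoC sigma))) (d2 := cs cj (c2f (chi r v) (RtoC sigma)))
        (k1 := C1) (k2 := C0) (c1 := c1f (phi r v) (RtoC sigma)) (c2 := c2f (phi r v) (RtoC sigma)).
      * pose proof (NTr r v Hu) as h. unfold fadd, fscal, fmul in h. rewrite !sconj_cs in h. exact h.
      * exact (nArM r v Hu).
      * exact (nAvM r v Hu).
      * rewrite <- (MAr r v Hu). intros i j Hi Hj. unfold fmul, madd, mscal.
        apply C_ext; simpl; ring.
      * exact (SXr r v Hu).
      * rewrite cs_c1, (Hchi_s r v Hu). exact E1.
      * rewrite cs_c2, (Hchi_s r v Hu). exact E2.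
  - eapply pdv_subst.
    + apply pdv_prod; [apply pdv_prod; [apply Npdv; exact HTv | exact HMv] | exact HXv].
    + intros r v Hu. unfold fadd, fmul, fzero.
      destruct (scal_ids sigma (phi r v) Hs (Hp0 r v Hu) (Hpd r v Hu)) as (E1 & E2 & E3 & E4).
      apply key with (Ar := Ar r v) (Av := Av r v) (nAr := nat Ar r v) (nAv := nat Av r v)
        (d1 := cs cj (e1f (chi r v) (RtoC sigma))) (d2 := cs cj (e2f (chi r v) (RtoC sigma)))
        (k1 := C0) (k2 := C1) (c1 := e1f (phi r v) (RtoC sigma)) (c2 := e2f (phi r v) (RtoC sigma)).
      * pose proof (NTv r v Hu) as h. unfold fadd, fscal, fmul in h. rewrite !sconj_cs in h. exact h.
      * exact (nArM r v Hu).
      * exact (nAvM r v Hu).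
      * rewrite <- (MAv r v Hu). intros i j Hi Hj. unfold fmul, madd, mscal.
        apply C_ext; simpl; ring.
      * exact (SXv r v Hu).
      * rewrite cs_e1, (Hchi_s r v Hu). exact E3.
      * rewrite cs_e2, (Hchi_s r v Hu). exact E4.
Qed.
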